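(* Let $\mathscr M$ be a module over $\mathbb Z[\mathbb L]_{\mathrm{loc}}=\mathbb Z[\mathbb L,\mathbb L^{-1},(1-\mathbb L^n)^{-1},n\ge1]$ and let $\mathbf T$, $\mathbf U$ be disjoint tuples of variables. Then $$\mathscr M[[\mathbf T]]_{\mathrm{int}}[[\mathbf U]]_{\mathrm{int}}\subset\mathscr M[[\mathbf T,\mathbf U]]_{\mathrm{int}}\subset\mathscr M[[\mathbf T]]_{\mathrm{int}}[[\mathbf U]],$$ where $\mathscr M[[\mathbf T]]_{\mathrm{int}}[[\mathbf U]]$ is the set of formal power series in $\mathbf U$ with coefficients in $\mathscr M[[\mathbf T]]_{\mathrm{int}}$, and $\mathscr M[[\mathbf T]]_{\mathrm{int}}[[\mathbf U]]_{\mathrm{int}}$ is the set of integrable series in $\mathbf U$ over the module $\mathscr M[[\mathbf T]]_{\mathrm{int}}$.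
   Context: For a module $\mathscr M$ over $\mathbb Z[\mathbb L,\mathbb L^{-1}]$ and variables $\mathbf T=(T_1,\dots,T_r)$, $\mathscr M[[\mathbf T]]_{\mathrm{int}}=\mathscr M[\mathbf T][(1-\mathbb L^m\mathbf T^{\mathbf n})^{-1}]_{m\in\mathbb Z_{<0},\,\mathbf n\in\mathbb N^r\setminus\{0\}}$, regarded as a submodule of $\mathscr M[[\mathbf T]]$ via geometric series expansion. *)

(* Defs.v *)
From HB Require Import structures.
From mathcomp Require Import all_boot all_order all_algebra fraction.
From mathcomp Require Import boolp.
From mathcomp Require Import ring.
Set Implicit Arguments. Unset Strict Implicit. Unset Printing Implicit Defensive.
Import Order.TTheory GRing.Theory Num.Theory.
Local Open Scope ring_scope.

(* The ring Z[L]_loc = Z[L, L^-1, (1 - L^n)^-1 (n >= 1)], realised    *)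
(* concretely as a subring of the fraction field Q(L) of Z[L]          *)
(* (L transcendental, i.e. L = 'X in {poly int}).                      *)
Notation QL := {fraction {poly int}}.
Notation "x %:F" := (@FracField.tofrac _ x) : ring_scope.

Definition locden (a : nat) (s : seq nat) : {poly int} :=
  'X^a * \prod_(n <- s) (1 - 'X^(n.+1)).

Definition locP (x : QL) : Prop :=
  exists (p : {poly int}) (a : nat) (s : seq nat), x = p%:F / (locden a s)%:F.

Definition locZL : {pred QL} := fun x => `[< locP x >].

Lemma locden_neq0 a s : locden a s != 0.
Proof.
rewrite /locden mulf_eq0 negb_or; apply/andP; split.
  by rewrite expf_eq0 polyX_eq0 andbF.
rewrite prodf_seq_neq0; apply/allP => n _ /=.
apply/eqP => /(congr1 (fun p : {poly int} => p`_0)).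
by rewrite coefB coef1 coefXn /= subr0 coef0.
Qed.

Lemma locdenF_neq0 a s : (locden a s)%:F != 0 :> QL.
Proof. by rewrite tofrac_eq0 locden_neq0. Qed.

Lemma locden_cat a b s t : locden (a + b) (s ++ t) = locden a s * locden b t.
Proof.
rewrite /locden exprD big_cat /=.
by rewrite -!mulrA; congr (_ * _); rewrite mulrCA.
Qed.

Lemma frac_sub_aux (F : fieldType) (p q A B : F) : A != 0 -> B != 0 ->
  p / A - q / B = (p * B - q * A) / (A * B).
Proof. by move=> hA hB; field; rewrite hA hB. Qed.

Lemma frac_mul_aux (F : fieldType) (p q A B : F) : A != 0 -> B != 0 ->
  p / A * (q / B) = (p * q) / (A * B).
Proof. by move=> hA hB; field; rewrite hA hB. Qed.

Lemma locZL_subring_closed : subring_closed locZL.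
Proof.
split.
- apply/asboolP; exists 1, 0%N, [::].
  by rewrite /locden big_nil expr0 mulr1 divr1.
- move=> x y /asboolP [p [a [s ->]]] /asboolP [q [b [t ->]]].
  apply/asboolP; exists (p * locden b t - q * locden a s), (a + b)%N, (s ++ t).
  have ha := locdenF_neq0 a s; have hb := locdenF_neq0 b t.
  apply: (etrans (frac_sub_aux _ _ ha hb)).
  rewrite locden_cat !rmorphB !rmorphM; reflexivity.
- move=> x y /asboolP [p [a [s ->]]] /asboolP [q [b [t ->]]].
  apply/asboolP; exists (p * q), (a + b)%N, (s ++ t).
  have ha := locdenF_neq0 a s; have hb := locdenF_neq0 b t.
  apply: (etrans (frac_mul_aux _ _ ha hb)).
  rewrite locden_cat !rmorphM; reflexivity.
Qed.

HB.instance Definition _ :=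
  GRing.isSubringClosed.Build QL locZL locZL_subring_closed.

Record ZLloc := MkZLloc { ZLloc_val : QL; _ : ZLloc_val \in locZL }.

HB.instance Definition _ := [isSub for ZLloc_val].
HB.instance Definition _ := [Choice of ZLloc by <:].
HB.instance Definition _ := [SubChoice_isSubComNzRing of ZLloc by <:].

Lemma Lpow_in (m : int) : (('X : {poly int})%:F ^ m : QL) \in locZL.
Proof.
apply/asboolP; case: m => k.
- exists 'X^k, 0%N, [::].
  by rewrite /locden big_nil expr0 mulr1 divr1 rmorphXn.
- exists 1, k.+1, [::].
  by rewrite /locden big_nil mulr1 rmorph1 mul1r NegzE -exprnN rmorphXn.
Qed.

Definition Lpow (m : int) : ZLloc := MkZLloc (Lpow_in m).

(* Formal power series in r variables T = (T_1,...,T_r) with          *)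
(* coefficients in a Z[L]_loc-module M: functions N^r -> M.            *)
Definition expo (r : nat) := {ffun 'I_r -> nat}.
Definition expo0 (r : nat) : expo r := [ffun=> 0%N].
Definition expo_le (r : nat) (n a : expo r) : bool := [forall i, n i <= a i]%N.
Definition expo_sub (r : nat) (a n : expo r) : expo r := [ffun i => a i - n i]%N.
(* exponent of T^a U^b in the variables (T, U) *)
Definition expo_cat (r s : nat) (a : expo r) (b : expo s) : expo (r + s) :=
  [ffun i => match split i with inl j => a j | inr k => b k end].

(* A factor (1 - L^m T^n) is encoded by the pair (m, n). *)
Definition valid_factor (r : nat) (f : int * expo r) : bool :=
  (f.1 < 0) && (f.2 != expo0 r).

(* carry an extra index x : X on which the operation acts pointwise; this  *)
(* is used for series whose coefficients are themselves series (x is then  *)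
(* the exponent of the inner variables), ordinary series use X = unit.    *)
Definition mul_factor (M : lmodType ZLloc) (r : nat) (X : Type)
    (f : int * expo r) (F : expo r -> X -> M) : expo r -> X -> M :=
  fun a x => F a x - (if expo_le f.2 a then Lpow f.1 *: F (expo_sub a f.2) x else 0).

Definition mul_factors (M : lmodType ZLloc) (r : nat) (X : Type)
    (fs : seq (int * expo r)) (F : expo r -> X -> M) : expo r -> X -> M :=
  foldr (@mul_factor M r X) F fs.

Definition finsupp (M : lmodType ZLloc) (r : nat) (X : Type)
    (P : expo r -> X -> M) : Prop :=
  exists S : seq (expo r), forall a, a \notin S -> forall x, P a x = 0.

(* F lies in (coefficient module)[T][(1 - L^m T^n)^-1]_{m<0, n<>0}:       *)
(* some finite product Q of factors (1 - L^m T^n), m < 0, n <> 0, makes  *)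
(* Q * F a polynomial, i.e. F = P / Q expanded as a power series.        *)
Definition integrable_gen (M : lmodType ZLloc) (r : nat) (X : Type)
    (F : expo r -> X -> M) : Prop :=
  exists fs : seq (int * expo r),
    all (@valid_factor r) fs /\ finsupp (mul_factors fs F).

Definition integrable (M : lmodType ZLloc) (r : nat) (F : expo r -> M) : Prop :=
  integrable_gen (fun a (_ : unit) => F a).

(* G in M[[T]]_int[[U]]_int, where G b a = coefficient of T^a U^b:        *)
(* every U-coefficient lies in M[[T]]_int, and G is integrable in U over   *)
(* the module M[[T]]_int (whose operations are coefficientwise).          *)
Definition int_int_series (M : lmodType ZLloc) (r s : nat)
    (G : expo s -> expo r -> M) : Prop :=
  (forall b, integrable (G b)) /\ integrable_gen G.

(* Main.v *)
From HB Require Import structures.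
Require Import Defs.
From mathcomp Require Import all_boot all_order all_algebra fraction.
From mathcomp Require Import boolp.
Set Implicit Arguments. Unset Strict Implicit. Unset Printing Implicit Defensive.
Import Order.TTheory GRing.Theory Num.Theory.
Local Open Scope ring_scope.

Lemma catL r s (a : expo r) (b : expo s) j : expo_cat a b (lshift s j) = a j.
Proof. by rewrite ffunE (unsplitK (inl _ j)). Qed.
Lemma catR r s (a : expo r) (b : expo s) k : expo_cat a b (rshift r k) = b k.
Proof. by rewrite ffunE (unsplitK (inr _ k)). Qed.

Lemma cat_le r s (a a' : expo r) (b b' : expo s) :
  expo_le (expo_cat a b) (expo_cat a' b') = expo_le a a' && expo_le b b'.
Proof.
apply/forallP/andP => [H|[/forallP H1 /forallP H2] i].
  split; apply/forallP => j.
    by have := H (lshift s j); rewrite !catL.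
  by have := H (rshift r j); rewrite !catR.
by rewrite !ffunE; case: split.
Qed.

Lemma cat_sub r s (a a' : expo r) (b b' : expo s) :
  expo_sub (expo_cat a b) (expo_cat a' b') = expo_cat (expo_sub a a') (expo_sub b b').
Proof. by apply/ffunP => i; rewrite !ffunE; case: split => j; rewrite ffunE. Qed.

Definition lp r s (c : expo (r + s)) : expo r := [ffun j => c (lshift s j)].
Definition rp r s (c : expo (r + s)) : expo s := [ffun k => c (rshift r k)].

Lemma cat_eta r s (c : expo (r + s)) : c = expo_cat (lp c) (rp c).
Proof.
apply/ffunP => i; rewrite ffunE; case: split_ordP => j -> ; by rewrite ffunE.
Qed.

Lemma lp_cat r s (a : expo r) (b : expo s) : lp (expo_cat a b) = a.
Proof. by apply/ffunP => j; rewrite ffunE catL. Qed.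

Lemma cat0 r s (a : expo r) (b : expo s) :
  expo_cat a b = expo0 (r + s) -> a = expo0 r /\ b = expo0 s.
Proof.
move=> e; split; apply/ffunP => j.
  by have := congr1 (fun f : expo (r + s) => f (lshift s j)) e; rewrite catL !ffunE.
by have := congr1 (fun f : expo (r + s) => f (rshift r j)) e; rewrite catR !ffunE.
Qed.

Lemma le0 r (a : expo r) : expo_le (expo0 r) a.
Proof. by apply/forallP => i; rewrite ffunE. Qed.
Lemma sub0 r (a : expo r) : expo_sub a (expo0 r) = a.
Proof. by apply/ffunP => i; rewrite !ffunE subn0. Qed.

Lemma le_swap r (f g a : expo r) :
  expo_le f a && expo_le g (expo_sub a f) = expo_le g a && expo_le f (expo_sub a g).
Proof.
have E : forall f g : expo r, expo_le f a && expo_le g (expo_sub a f) =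
   [forall i, f i + g i <= a i]%N.
  move=> f' g'; apply/andP/forallP => [[/forallP H1 /forallP H2] i|H].
    by have := H2 i; rewrite ffunE leq_subRL ?H1.
  split; apply/forallP => i; have := H i; rewrite ?ffunE.
    by apply: leq_trans; apply: leq_addr.
  move=> h; rewrite leq_subRL //; apply: leq_trans h; apply: leq_addr.
rewrite !E; apply/forallP/forallP => H i; by rewrite addnC.
Qed.

Lemma sub_swap r (a f g : expo r) :
  expo_sub (expo_sub a f) g = expo_sub (expo_sub a g) f.
Proof. by apply/ffunP => i; rewrite !ffunE -!subnDA addnC. Qed.

Lemma Lpow0 : Lpow 0 = 1.
Proof. apply: val_inj; exact: expr0z. Qed.

Lemma grp_aux (V : zmodType) (h a b c : V) : h - a - (b - c) = h - b - (a - c).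
Proof. rewrite !opprB !addrA -!addrA; congr (_ + _); by rewrite addrCA [RHS]addrCA [- b - a]addrC. Qed.

Lemma mfC (M : lmodType ZLloc) r (X : Type) (f g : int * expo r) (H : expo r -> X -> M) :
  mul_factor f (mul_factor g H) = mul_factor g (mul_factor f H).
Proof.
apply/funext=> a; apply/funext=> x; rewrite /mul_factor.
have E1 := le_swap f.2 g.2 a.
have E2 := sub_swap a f.2 g.2.
case hf: (expo_le f.2 a); case hg: (expo_le g.2 a); rewrite hf hg /= in E1.
- rewrite -E1 E2; case: (expo_le g.2 (expo_sub a f.2)).
    by rewrite !scalerBr !scalerA mulrC grp_aux.
  by rewrite !subr0 addrAC.
- by rewrite E1 !subr0.
- by rewrite -E1 !subr0.
- by [].
Qed.

Lemma mfsC (M : lmodType ZLloc) r (X : Type) fs (f : int * expo r) (H : expo r -> X -> M) :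
  mul_factors fs (mul_factor f H) = mul_factor f (mul_factors fs H).
Proof. by elim: fs => //= g fs IH; rewrite IH mfC. Qed.

Lemma mfsCC (M : lmodType ZLloc) r (X : Type) (fs gs : seq (int * expo r)) (H : expo r -> X -> M) :
  mul_factors fs (mul_factors gs H) = mul_factors gs (mul_factors fs H).
Proof. by elim: gs => //= g gs IH; rewrite mfsC IH. Qed.

Lemma mfs_cat (M : lmodType ZLloc) r (X : Type) (fs gs : seq (int * expo r)) (H : expo r -> X -> M) :
  mul_factors (fs ++ gs) H = mul_factors fs (mul_factors gs H).
Proof. by rewrite /mul_factors foldr_cat. Qed.

Lemma mfD (M : lmodType ZLloc) r (X : Type) (f : int * expo r) (F G : expo r -> X -> M) :
  mul_factor f (fun a x => F a x + G a x) = fun a x => mul_factor f F a x + mul_factor f G a x.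
Proof.
apply/funext=> a; apply/funext=> x; rewrite /mul_factor.
by case: ifP => _; rewrite ?subr0 // scalerDr opprD addrACA.
Qed.

Lemma mfZ (M : lmodType ZLloc) r (X : Type) (f : int * expo r) c (F : expo r -> X -> M) :
  mul_factor f (fun a x => c *: F a x) = fun a x => c *: mul_factor f F a x.
Proof.
apply/funext=> a; apply/funext=> x; rewrite /mul_factor.
by case: ifP => _; rewrite ?subr0 // scalerBr !scalerA mulrC.
Qed.

Lemma mf0 (M : lmodType ZLloc) r (X : Type) (f : int * expo r) :
  mul_factor f (fun (_ : expo r) (_ : X) => 0 : M) = fun _ _ => 0.
Proof.
apply/funext=> a; apply/funext=> x; rewrite /mul_factor.
by case: ifP => _; rewrite ?scaler0 subrr.
Qed.

Lemma mfsD (M : lmodType ZLloc) r (X : Type) fs (F G : expo r -> X -> M) :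
  mul_factors fs (fun a x => F a x + G a x) = fun a x => mul_factors fs F a x + mul_factors fs G a x.
Proof. by elim: fs => //= f fs IH; rewrite IH mfD. Qed.

Lemma mfsZ (M : lmodType ZLloc) r (X : Type) fs c (F : expo r -> X -> M) :
  mul_factors fs (fun a x => c *: F a x) = fun a x => c *: mul_factors fs F a x.
Proof. by elim: fs => //= f fs IH; rewrite IH mfZ. Qed.

Lemma mfs0 (M : lmodType ZLloc) r (X : Type) (fs : seq (int * expo r)) :
  mul_factors fs (fun (_ : expo r) (_ : X) => 0 : M) = fun _ _ => 0.
Proof. by elim: fs => //= f fs IH; rewrite IH mf0. Qed.

Definition expo_add r (a n : expo r) : expo r := [ffun i => a i + n i]%N.
Definition ext r (n : expo r) (S : seq (expo r)) := S ++ map (fun a => expo_add a n) S.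
Definition extl r (fs : seq (int * expo r)) S := foldr (fun f S => ext f.2 S) S fs.
Definition suppin (M : lmodType ZLloc) r (X : Type) (F : expo r -> X -> M) (S : seq (expo r)) :=
  forall a, a \notin S -> forall x, F a x = 0.

Lemma suppin_mf (M : lmodType ZLloc) r (X : Type) (f : int * expo r) (F : expo r -> X -> M) S :
  suppin F S -> suppin (mul_factor f F) (ext f.2 S).
Proof.
move=> h a; rewrite mem_cat negb_or => /andP[aS aT] x; rewrite /mul_factor h //.
case: ifP => le; rewrite ?subrr //.
rewrite h ?scaler0 ?subrr //.
apply: contra aT => hin; apply/mapP; exists (expo_sub a f.2) => //.
by apply/ffunP => i; rewrite !ffunE subnK //; move/forallP: le.
Qed.

Lemma suppin_mfs (M : lmodType ZLloc) r (X : Type) fs (F : expo r -> X -> M) S :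
  suppin F S -> suppin (mul_factors fs F) (extl fs S).
Proof. by move=> h; elim: fs => //= f fs IH; apply: suppin_mf. Qed.

Lemma suppin_add (M : lmodType ZLloc) r (X : Type) (F G : expo r -> X -> M) S T :
  suppin F S -> suppin G T -> suppin (fun a x => F a x + G a x) (S ++ T).
Proof.
by move=> hF hG a; rewrite mem_cat negb_or => /andP[aS aT] x; rewrite hF // hG // addr0.
Qed.

Lemma suppin_scale (M : lmodType ZLloc) r (X : Type) c (F : expo r -> X -> M) S :
  suppin F S -> suppin (fun a x => c *: F a x) S.
Proof. by move=> hF a aS x; rewrite hF // scaler0. Qed.

Lemma ig_add (M : lmodType ZLloc) r (X : Type) (F G : expo r -> X -> M) :
  integrable_gen F -> integrable_gen G -> integrable_gen (fun a x => F a x + G a x).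
Proof.
move=> [fs [vf [S hS]]] [gs [vg [T hT]]]; exists (fs ++ gs); split.
  by rewrite all_cat vf vg.
rewrite mfs_cat (mfsD gs F G) (mfsD fs (mul_factors gs F)) (mfsCC fs gs F).
exists (extl gs S ++ extl fs T); apply: suppin_add; exact: suppin_mfs.
Qed.

Lemma ig_scale (M : lmodType ZLloc) r (X : Type) c (F : expo r -> X -> M) :
  integrable_gen F -> integrable_gen (fun a x => c *: F a x).
Proof.
move=> [fs [vf [S hS]]]; exists fs; split => //.
by rewrite mfsZ; exists S; apply: suppin_scale.
Qed.

Lemma ig_mf (M : lmodType ZLloc) r (X : Type) g (F : expo r -> X -> M) :
  integrable_gen F -> integrable_gen (mul_factor g F).
Proof.
move=> [fs [vf [S hS]]]; exists fs; split => //.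
by rewrite mfsC; exists (ext g.2 S); apply: suppin_mf.
Qed.

Lemma ig_fin (M : lmodType ZLloc) r (X : Type) (F : expo r -> X -> M) S :
  suppin F S -> integrable_gen F.
Proof. by move=> h; exists [::]; split => //; exists S. Qed.

Lemma ig_ext (M : lmodType ZLloc) r (X : Type) (F G : expo r -> X -> M) :
  (forall a x, F a x = G a x) -> integrable_gen F -> integrable_gen G.
Proof.
by move=> e; have -> : F = G by apply/funext=> a; apply/funext=> x; apply: e.
Qed.

Lemma ig_shift (M : lmodType ZLloc) r (X : Type) (n : expo r) (K : expo r -> X -> M) :
  integrable_gen K ->
  integrable_gen (fun a x => if expo_le n a then K (expo_sub a n) x else 0).
Proof.
move=> hK.
apply: (@ig_ext _ _ _ (fun a x => K a x + (-1) *: mul_factor (0%R, n) K a x)).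
  move=> a x; rewrite /mul_factor /= Lpow0 scaleN1r; case: ifP => _.
    by rewrite scale1r opprB addrC subrK.
  by rewrite subr0 subrr.
apply: ig_add => //; apply: ig_scale; exact: ig_mf.
Qed.

Definition sz r (b : expo r) := (\sum_i b i)%N.

Lemma sz_sub r (n b : expo r) :
  expo_le n b -> n != expo0 r -> (sz (expo_sub b n) < sz b)%N.
Proof.
move=> /forallP hle hn.
have E : sz b = (sz (expo_sub b n) + sz n)%N.
  rewrite /sz -big_split; apply: eq_bigr => i _; rewrite ffunE /=; by rewrite subnK ?hle.
have : (0 < sz n)%N.
  rewrite lt0n /sz sum_nat_eq0; apply: contra hn => /forallP h.
  apply/eqP/ffunP => i; rewrite ffunE; apply/eqP; exact: h i.
by rewrite E -{1}[sz (expo_sub b n)]addn0 ltn_add2l.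
Qed.

Definition liftT r s (f : int * expo r) : int * expo (r + s) := (f.1, expo_cat f.2 (expo0 s)).
Definition liftU r s (f : int * expo s) : int * expo (r + s) := (f.1, expo_cat (expo0 r) f.2).

Lemma LT (M : lmodType ZLloc) r s (X : Type) (ts : seq (int * expo r))
    (H : expo (r + s) -> X -> M) a b x :
  mul_factors (map (@liftT r s) ts) H (expo_cat a b) x =
  mul_factors ts (fun a' x' => H (expo_cat a' b) x') a x.
Proof.
elim: ts a => //= t ts IH a.
by rewrite /mul_factor /= cat_le le0 andbT cat_sub sub0 !IH.
Qed.

Lemma LU (M : lmodType ZLloc) r s (X : Type) (us : seq (int * expo s))
    (H : expo (r + s) -> X -> M) a b x :
  mul_factors (map (@liftU r s) us) H (expo_cat a b) x =
  mul_factors us (fun b' a' => H (expo_cat a' b') x) b a.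
Proof.
elim: us b => //= u us IH b.
by rewrite /mul_factor /= cat_le le0 /= cat_sub sub0 !IH.
Qed.

Lemma cat00 r s : expo_cat (expo0 r) (expo0 s) = expo0 (r + s).
Proof. by apply/ffunP => i; rewrite !ffunE; case: split => j; rewrite ffunE. Qed.

Lemma valid_liftT r s (t : int * expo r) : valid_factor (liftT s t) = valid_factor t.
Proof.
rewrite /valid_factor /=; congr (_ && ~~ _); apply/eqP/eqP => [/cat0[]//|->].
exact: cat00.
Qed.

Lemma valid_liftU r s (t : int * expo s) : valid_factor (liftU r t) = valid_factor t.
Proof.
rewrite /valid_factor /=; congr (_ && ~~ _); apply/eqP/eqP => [/cat0[]//|->].
exact: cat00.
Qed.

Lemma int_ext (M : lmodType ZLloc) r (F G : expo r -> M) :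
  (forall a, F a = G a) -> integrable F -> integrable G.
Proof. by move=> e; apply: ig_ext => a x; apply: e. Qed.

Lemma int_sub (M : lmodType ZLloc) r (F G : expo r -> M) :
  integrable F -> integrable G -> integrable (fun a => F a - G a).
Proof.
move=> hF hG; apply: (@ig_ext _ _ _ (fun a x => F a + (-1) *: G a)).
  by move=> a x; rewrite scaleN1r.
by apply: ig_add => //; apply: ig_scale.
Qed.

Lemma int_scale (M : lmodType ZLloc) r c (F : expo r -> M) :
  integrable F -> integrable (fun a => c *: F a).
Proof. exact: ig_scale. Qed.

Lemma part1 (M : lmodType ZLloc) (r s : nat) (F : expo (r + s) -> M) :
  int_int_series (fun b a => F (expo_cat a b)) -> integrable F.
Proof.
move=> [h1 [us [vu [S hS]]]].
set G := fun b a => F (expo_cat a b).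
set P := mul_factors us G.
have hP : forall b, integrable (P b).
  rewrite /P; elim: us {vu hS P} => [//|u us IH] b /=.
  rewrite /mul_factor; case: (expo_le u.2 b) => /=.
    by apply: int_sub => //; apply: int_scale.
  by apply: int_ext (IH b) => a; rewrite subr0.
have [ts [vt [L hL]]] : exists ts, all (@valid_factor r) ts /\ exists L,
    forall b, b \in S -> suppin (mul_factors ts (fun a (_ : unit) => P b a)) L.
  elim: S {hS} => [|b S [ts [vt [L hL]]]].
    by exists [::]; split => //; exists [::].
  have [gs [vg [Lb hb]]] := hP b.
  exists (gs ++ ts); split; first by rewrite all_cat vg vt.
  exists (extl ts Lb ++ extl gs L) => b'; rewrite in_cons => /orP[/eqP-> | hb'].
    rewrite mfs_cat mfsCC => a; rewrite mem_cat negb_or => /andP[h _].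
    exact: suppin_mfs hb a h.
  rewrite mfs_cat => a; rewrite mem_cat negb_or => /andP[_ h].
  exact: suppin_mfs (hL _ hb') a h.
exists (map (@liftT r s) ts ++ map (@liftU r s) us); split.
  rewrite all_cat !all_map; apply/andP; split.
    by apply/allP => t /(allP vt); rewrite /preim /= valid_liftT.
  by apply/allP => t /(allP vu); rewrite /preim /= valid_liftU.
exists [seq expo_cat a b | a <- L, b <- S] => c hc x.
have ec := cat_eta c; set a := lp c in ec; set b := rp c in ec.
rewrite ec in hc *; rewrite mfs_cat LT.
have -> : (fun a' x' => mul_factors (map (@liftU r s) us) (fun c _ => F c) (expo_cat a' b) x')
     = fun a' (_ : unit) => P b a'.
  by apply/funext => a'; apply/funext => x'; rewrite LU.
case: (boolP (b \in S)) => hb.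
  apply: (hL b hb); apply: contra hc => h; exact: allpairs_f.
have -> : (fun a' (_ : unit) => P b a') = fun _ _ => 0.
  by apply/funext => a'; apply/funext => x'; apply: hS.
by rewrite mfs0.
Qed.

Lemma KL (M : lmodType ZLloc) r s (f : int * expo (r + s)) (H : expo (r + s) -> unit -> M) :
  valid_factor f ->
  (forall b, integrable (fun a => mul_factor f H (expo_cat a b) tt)) ->
  forall b, integrable (fun a => H (expo_cat a b) tt).
Proof.
case: f => m n /andP[/= hm hn] hfH.
set nT := lp n; set nU := rp n.
have E : forall a b, mul_factor (m, n) H (expo_cat a b) tt = H (expo_cat a b) tt -
    (if expo_le nT a && expo_le nU b
     then Lpow m *: H (expo_cat (expo_sub a nT) (expo_sub b nU)) tt else 0).
  by move=> a b; rewrite /mul_factor /= {1 2}[n]cat_eta cat_le cat_sub.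
case: (eqVneq nU (expo0 s)) => hU.
  have hT : nT != expo0 r.
    apply: contra hn => /eqP hT0; apply/eqP.
    by rewrite [n]cat_eta -/nT -/nU hT0 hU cat00.
  move=> b; have [gs [vg hg]] := hfH b.
  exists (gs ++ [:: (m, nT)]); split.
    by rewrite all_cat vg /= /valid_factor /= hm hT.
  rewrite mfs_cat /=.
  have <- : (fun a (_ : unit) => mul_factor (m, n) H (expo_cat a b) tt) =
      mul_factor (m, nT) (fun a (_ : unit) => H (expo_cat a b) tt).
    apply/funext => a; apply/funext => x; case: x.
    by rewrite E hU le0 andbT sub0 /mul_factor.
  exact: hg.
have key : forall k b, (sz b < k)%N -> integrable (fun a => H (expo_cat a b) tt).
  elim=> [//|k IH] b hb.
  apply: (@ig_ext _ _ _ (fun a x => mul_factor (m, n) H (expo_cat a b) tt +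
      (if expo_le nU b then Lpow m *:
         (if expo_le nT a then H (expo_cat (expo_sub a nT) (expo_sub b nU)) tt else 0)
       else 0))).
    move=> a x; case: x; rewrite E.
    case: (expo_le nU b); case: (expo_le nT a);
      by rewrite /= ?scaler0 ?subr0 ?addr0 // subrK.
  apply: ig_add; first exact: hfH b.
  case hle: (expo_le nU b); last first.
    by apply: (@ig_fin _ _ _ _ [::]) => a _ x.
  apply: ig_scale.
  apply: (@ig_shift _ _ _ _ (fun a (_ : unit) => H (expo_cat a (expo_sub b nU)) tt)).
  apply: IH; apply: leq_trans (sz_sub hle hU) _; by rewrite -ltnS.
by move=> b; apply: (key (sz b).+1).
Qed.

Lemma part2 (M : lmodType ZLloc) (r s : nat) (F : expo (r + s) -> M) :
  integrable F -> forall b : expo s, integrable (fun a : expo r => F (expo_cat a b)).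
Proof.
move=> [fs [vf [L hL]]].
have base : forall (H : expo (r + s) -> unit -> M) L', suppin H L' ->
    forall b, integrable (fun a => H (expo_cat a b) tt).
  move=> H L' hH b; apply: (@ig_fin _ _ _ _ (map (@lp r s) L')) => a ha x.
  case: x; apply: hH; apply: contra ha => h; apply/mapP; exists (expo_cat a b) => //.
  by rewrite lp_cat.
have gen : forall fs (H : expo (r + s) -> unit -> M), all (@valid_factor (r + s)) fs ->
    (forall b, integrable (fun a => mul_factors fs H (expo_cat a b) tt)) ->
    forall b, integrable (fun a => H (expo_cat a b) tt).
  elim=> [//|f fs' IH] H /andP[vf1 vfs] h.
  by apply: IH vfs _; apply: KL vf1 _; exact: h.
exact: (gen fs (fun c _ => F c) vf (base _ L hL)).
Qed.

Theorem lemma5p2 (M : lmodType ZLloc) (r s : nat) (F : expo (r + s) -> M) :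
  (int_int_series (fun b a => F (expo_cat a b)) -> integrable F) /\
  (integrable F -> forall b : expo s, integrable (fun a : expo r => F (expo_cat a b))).
Proof. split; [exact: part1 | exact: part2]. Qed.
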